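(* Assume all the hypotheses of the following statement: $U=\mathcal Y$; $w:\mathcal Y\to\mathbb R$ is continuous and bounded; (H1) $\mathcal Y$ is reflexive; (H2) there exists $M:\mathcal Y\times\mathcal Y\to[0,\infty]$ such that $y_1\mapsto M(y_1,y_2)$ is Fréchet differentiable at every $y_1\neq y_2$, $y_2\mapsto M(y_1,y_2)$ is Fréchet differentiable at every $y_2\neq y_1$, and there are $\lambda\in(0,1]$, $\Lambda\in[1,\infty)$ with $\lambda\|y_1-y_2\|\le M(y_1,y_2)\le\Lambda\|y_1-y_2\|$ for all $y_1,y_2$ and $\lambda\le\|\nabla M(\cdot,y_2)(y_1)\|_{\mathcal Y^*}$, $\|\nabla M(y_1,\cdot)(y_2)\|_{\mathcal Y^*}\le\Lambda$ whenever defined; $D_df_x(u)$ exists for all $x\in X$, $u\in\mathcal Y$ and unit $d$, and there is $C_0>0$ with $\inf_{x\in S(u)}D_df_x(u)>-C_0$ for all $u\in\mathcal Y$ and unit $d$; and for every unit $d$, $w$ is a viscosity subsolution in $\mathcal Y$ of $-\langle\nabla w(u),d\rangle+\inf_{x\in S(u)}D_df_x(u)=0$. Then $w$ is (globally) Lipschitz on $\mathcal Y$.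
   Context: Let $\mathfrak X,\mathcal Y$ be real Banach spaces, $X\subset\mathfrak X$ nonempty, $f:X\times\mathcal Y\to\mathbb R$ continuous, $\Phi:\mathcal Y\to2^X$ a set-valued map, $v(u)=\inf_{x\in\Phi(u)}f(x,u)$, $S(u)=\{x\in\Phi(u):f(x,u)=v(u)\}$, $f_x(u):=f(x,u)$, and $D_df_x(u)=\lim_{s\downarrow0}\frac{f(x,u+sd)-f(x,u)}{s}$. Unit vectors have norm $1$; $\inf\emptyset=+\infty$. $\mathcal J^+w(u_0)=\{p\in\mathcal Y^*:\limsup_{u\to u_0}\frac{w(u)-w(u_0)-\langle p,u-u_0\rangle}{\|u-u_0\|}\le0\}$. For fixed unit $d$, an upper semicontinuous $w$ is a viscosity subsolution of $-\langle\nabla w(u),d\rangle+\inf_{x\in S(u)}D_df_x(u)=0$ at $u_0$ if $-\langle\eta,d\rangle+\inf_{x\in S(u_0)}D_df_x(u_0)\le0$ for all $\eta\in\mathcal J^+w(u_0)$; ''in a set'' means at every point. *)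

(* Defs.v *)
From HB Require Import structures.
From mathcomp Require Import all_boot all_order all_algebra.
From mathcomp Require Import all_classical all_reals all_analysis.
Set Implicit Arguments. Unset Strict Implicit. Unset Printing Implicit Defensive.
Import Order.TTheory GRing.Theory Num.Theory.
Import numFieldNormedType.Exports.
Local Open Scope classical_set_scope.
Local Open Scope ring_scope.

Section Defs.
Variable R : realType.

Definition in_dual (Y : normedModType R) (p : Y -> R) : Prop :=
  (forall (a : R) (x y : Y), p (a *: x + y) = a * p x + p y) /\ continuous p.

Definition dual_norm (Y : normedModType R) (p : Y -> R) : \bar R :=
  ereal_sup [set (`|p y|)%:E | y in [set y : Y | `|y| <= 1]].

(* reflexivity: the canonical embedding Y -> Y^** is onto, i.e. every
   bounded linear functional Phi on Y^* is evaluation at some y *)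
Definition reflexive_space (Y : normedModType R) : Prop :=
  forall Phi : (Y -> R) -> R,
    (forall (a : R) (p q : Y -> R), in_dual p -> in_dual q ->
        Phi (fun y => a * p y + q y) = a * Phi p + Phi q) ->
    (exists C : R, forall p, in_dual p ->
        ((`|Phi p|)%:E <= C%:E * dual_norm p)%E) ->
    exists y : Y, forall p, in_dual p -> Phi p = p y.

(* value function v(u) = inf_{x in Phi(u)} f(x,u)  (inf of empty set = +oo) *)
Definition valfun (XX Y : Type) (f : XX -> Y -> R) (Phi : Y -> set XX)
  (u : Y) : \bar R :=
  ereal_inf [set (f x u)%:E | x in Phi u].

Definition solset (XX Y : Type) (f : XX -> Y -> R) (Phi : Y -> set XX)
  (u : Y) : set XX :=
  [set x | Phi u x /\ (f x u)%:E = valfun f Phi u].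

Definition ddiff (XX : Type) (Y : normedModType R) (f : XX -> Y -> R)
  (x : XX) (u d : Y) : R :=
  lim ((fun s : R => (f x (u + s *: d) - f x u) / s) @ 0^'+).

Definition ddiff_exists (XX : Type) (Y : normedModType R) (f : XX -> Y -> R)
  (x : XX) (u d : Y) : Prop :=
  cvg ((fun s : R => (f x (u + s *: d) - f x u) / s) @ 0^'+).

(* Frechet superdifferential J^+ w(u0): limsup_{u -> u0} (...)/||u - u0|| <= 0,
   written out *)
Definition superjet (Y : normedModType R) (w : Y -> R) (u0 : Y)
  : set (Y -> R) :=
  [set p | in_dual p /\
     forall e : R, 0 < e -> \forall u \near u0^',
       (w u - w u0 - p (u - u0)) / `|u - u0| <= e].

Definition infD (XX : Type) (Y : normedModType R) (f : XX -> Y -> R)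
  (Phi : Y -> set XX) (u d : Y) : \bar R :=
  ereal_inf [set (ddiff f x u d)%:E | x in solset f Phi u].

Definition visc_subsol_at (XX : Type) (Y : normedModType R) (f : XX -> Y -> R)
  (Phi : Y -> set XX) (d : Y) (w : Y -> R) (u0 : Y) : Prop :=
  (forall (u : Y) (e : R), 0 < e -> \forall v \near u, w v < w u + e) /\
  forall eta, superjet w u0 eta ->
    ((- eta d)%:E + infD f Phi u0 d <= 0)%E.
End Defs.

(* Main.v *)
Require Import Defs.
From HB Require Import structures.
From mathcomp Require Import all_boot all_order all_algebra.
From mathcomp Require Import all_classical all_reals all_analysis.
From mathcomp Require Import ring lra.
Import Order.TTheory GRing.Theory Num.Theory.
Import numFieldNormedType.Exports.
Local Open Scope classical_set_scope.
Local Open Scope ring_scope.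

Lemma le_approx (R : realType) (x y : R) : (forall d, 0 < d -> x <= y + d) -> x <= y.
Proof.
move=> H; rewrite leNgt; apply/negP => yx.
have := H ((x - y) / 2); have : 0 < (x - y) / 2 by lra.
move=> h /(_ h); lra.
Qed.

Lemma geo_sum (R : realType) n : \sum_(i < n) (2^-1 : R) ^+ i = 2 - 2 * (2^-1) ^+ n.
Proof.
elim: n => [|n IH]; first by rewrite big_ord0 expr0; lra.
rewrite big_ord_recr /= IH exprS; lra.
Qed.

Lemma geo_le (R : realType) n : \sum_(i < n) (2^-1 : R) ^+ i <= 2.
Proof.
rewrite geo_sum; have : 0 <= (2^-1 : R) ^+ n by apply: exprn_ge0; lra.
lra.
Qed.

Lemma exist_near_sup (R : realType) (T : Type) (g : T -> R) (Bg : R) :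
  (forall x, g x <= Bg) -> forall z e, 0 < e ->
  exists x, g z <= g x /\ forall u, g u <= g x + e.
Proof.
move=> gB z e e0.
have hs : has_sup (range g).
  by split; [exists (g z), z | exists Bg => _ [x _ <-]].
have [_ [x0 _ <-] hx0] := sup_adherent e0 hs.
have ub u : g u <= sup (range g) by apply: sup_upper_bound => //; exists u.
have [zx|xz] := leP (g z) (g x0).
  exists x0; split => // u; have := ub u; lra.
exists z; split => // u; have := ub u; lra.
Qed.

Arguments exist_near_sup {R T g Bg}.

Lemma series_bnd (R : realType) (t : nat -> R) (C : R) :
  (forall i, `|t i| <= (2^-1) ^+ i * C) -> forall n, `|\sum_(i < n) t i| <= 2 * C.
Proof.
move=> tb n; apply: le_trans (ler_norm_sum _ _ _) _.
apply: le_trans (_ : \sum_(i < n) (2^-1) ^+ i * C <= _).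
  by apply: ler_sum => i _.
rewrite -mulr_suml.
have C0 : 0 <= C by have := tb 0%N; rewrite expr0 mul1r; apply: le_trans.
by apply: ler_wpM2r => //; apply: geo_le.
Qed.

Arguments series_bnd {R t C}.

Lemma series_cvg (R : realType) (t : nat -> R) (C : R) :
  (forall i, `|t i| <= (2^-1) ^+ i * C) -> cvgn (fun n => \sum_(i < n) t i).
Proof.
move=> tb.
have C0 : 0 <= C by have := tb 0%N; rewrite expr0 mul1r; apply: le_trans.
have hp : forall i, 0 <= (2^-1 : R) ^+ i by move=> i; apply: exprn_ge0; lra.
set A := fun n => \sum_(i < n) (t i + (2^-1) ^+ i * C).
set B := fun n => \sum_(i < n) ((2^-1 : R) ^+ i * C).
have E n : \sum_(i < n) t i = A n - B n.
  by rewrite /A /B big_split /=; ring.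
have -> : (fun n => \sum_(i < n) t i) = A - B by apply: funext => n; exact: E.
have Ainc : {homo A : n m / (n <= m)%N >-> n <= m}.
  move=> n m nm; rewrite /A (big_ord_widen m (fun i => t i + 2^-1 ^+ i * C) nm).
  rewrite [leRHS](bigID (fun i : 'I_m => (i < n)%N)) /= lerDl.
  apply: sumr_ge0 => i _; have := tb i; rewrite ler_norml; lra.
have Binc : {homo B : n m / (n <= m)%N >-> n <= m}.
  move=> n m nm; rewrite /B (big_ord_widen m (fun i => 2^-1 ^+ i * C) nm).
  rewrite [leRHS](bigID (fun i : 'I_m => (i < n)%N)) /= lerDl.
  by apply: sumr_ge0 => i _; apply: mulr_ge0.
apply: is_cvgB.
  apply/cvg_ex; eexists; apply: nondecreasing_cvgn => //.
  exists (4 * C) => _ [n _ <-]; rewrite /A big_split /= -mulr_suml.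
  have := series_bnd tb n; rewrite ler_norml => /andP[_ h1].
  have := geo_le R n; have := mulr_ge0 C0 C0; nra.
apply/cvg_ex; eexists; apply: nondecreasing_cvgn => //.
exists (2 * C) => _ [n _ <-]; rewrite /B -mulr_suml.
have := geo_le R n; nra.
Qed.

Arguments series_cvg {R t C}.

Lemma near_all_le (T : Type) (F : set_system T) (FF : Filter F) (P : nat -> T -> Prop) N :
  (forall i, (i <= N)%N -> \forall u \near F, P i u) ->
  \forall u \near F, forall i, (i <= N)%N -> P i u.
Proof.
elim: N => [|N IH] H.
  by apply: filterS (H 0%N (leqnn 0)) => u Pu [|i] //.
have H1 := IH (fun i iN => H i (leqW iN)).
apply: filterS2 H1 (H N.+1 (leqnn _)) => u H1u HN i.
by rewrite leq_eqVlt ltnS => /orP[/eqP->|/H1u].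
Qed.

Lemma cont_sum (R : realType) (T : topologicalType) (g : nat -> T -> R) k :
  (forall i, continuous (g i)) -> continuous (fun x => \sum_(i < k) g i x).
Proof.
move=> gc; elim: k => [|k IH].
  have -> : (fun x => \sum_(i < 0) g i x) = cst 0.
    by apply: funext => x; rewrite big_ord0.
  by move=> x; apply: cvg_cst.
have -> : (fun x => \sum_(i < k.+1) g i x) = (fun x => \sum_(i < k) g i x) + g k.
  by apply: funext => x; rewrite big_ord_recr.
by move=> x; apply: continuousD; [apply: IH | apply: gc].
Qed.

Section Main.
Context (R : realType) (Y : completeNormedModType R) (M : Y -> Y -> R) (lam Lam : R).
Hypotheses (M0 : forall a b, 0 <= M a b)
  (Md : forall y1 y2, y1 != y2 -> differentiable (fun y => M y y2) y1)
  (lam0 : 0 < lam) (Lam1 : 1 <= Lam)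
  (Mb : forall y1 y2, lam * `|y1 - y2| <= M y1 y2 <= Lam * `|y1 - y2|)
  (Mdn : forall y1 y2, y1 != y2 ->
        (lam%:E <= dual_norm ('d (fun y => M y y2) y1 : Y -> R))%E /\
        (dual_norm ('d (fun y => M y y2) y1 : Y -> R) <= Lam%:E)%E).

Let Lam0 : 0 < Lam. Proof. by apply: lt_le_trans Lam1. Qed.

Lemma diff_o (f : Y -> R) x : differentiable f x -> forall e : R, 0 < e ->
  \forall u \near x, `|f u - f x - 'd f x (u - x)| <= e * `|u - x|.
Proof.
move=> df e e0.
have E := diff_locallyx df.
set o := (X in forall h, _ = _ + _ + X h) in E.
rewrite (near_shift 0 x) subr0.
apply: filterS (littleoP o e0) => h /=.
rewrite addrK E; suff -> : f x + 'd f x h + o h - f x - 'd f x h = o h by [].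
by ring.
Qed.
Lemma Mxx x : M x x = 0.
Proof.
apply/eqP; rewrite eq_le M0 andbT.
by have /andP[_] := Mb x x; rewrite subrr normr0 mulr0.
Qed.

Lemma dual_le (p : Y -> R) (C : R) : (forall h, p (`|h|^-1 *: h) = `|h|^-1 * p h) ->
  p 0 = 0 -> (dual_norm p <= C%:E)%E -> forall h, `|p h| <= C * `|h|.
Proof.
move=> pZ p0 hC h.
have [->|h0] := eqVneq h 0; first by rewrite p0 normr0 normr0 mulr0.
have nh : 0 < `|h| by rewrite normr_gt0.
have : ((`|p (`|h|^-1 *: h)|)%:E <= C%:E)%E.
  apply: le_trans hC; apply: ereal_sup_ubound; exists (`|h|^-1 *: h) => //=.
  by rewrite normrZ normrV ?unitfE ?gt_eqF// normr_id mulVf ?gt_eqF.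
rewrite lee_fin pZ normrM normrV ?unitfE ?gt_eqF// normr_id.
by rewrite ler_pdivrMl // mulrC.
Qed.

Lemma dual_ge (p : Y -> R) (C : R) : (C%:E <= dual_norm p)%E -> 0 < C ->
  exists z, `|z| <= 1 /\ C / 2 < `|p z|.
Proof.
move=> hC C0; apply/not_existsP => hn.
have : (dual_norm p <= (C/2)%:E)%E.
  apply: ge_ereal_sup => _ [z /= z1 <-]; rewrite lee_fin.
  by case: (leP (`|p z|) (C/2)) => // H; exfalso; apply: (hn z).
move=> /(le_trans hC); rewrite lee_fin => H.
by clear hC hn Mdn; lra.
Qed.


Lemma dM_le x v : x != v -> forall h, `|'d (fun y => M y v) x h| <= Lam * `|h|.
Proof.
move=> xv; apply: dual_le; last by case: (Mdn _ _ xv).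
- by move=> h; rewrite linearZ.
- by rewrite linear0.
Qed.

Lemma dM_ge x v : x != v -> exists z, `|z| <= 1 /\ lam / 2 < `|'d (fun y => M y v) x z|.
Proof. by move=> xv; apply: dual_ge => //; case: (Mdn _ _ xv). Qed.

Lemma phi_diff x v (h : Y) t : x + t *: h != v ->
  is_derive t 1 (fun s : R => M (x + s *: h) v) ('d (fun y => M y v) (x + t *: h) h).
Proof.
move=> xv.
have gd : is_diff t (cst x + *:%R^~ h : R -> Y) (0 + *:%R^~ h).
  by apply: is_diffD.
have Mdi : is_diff (x + t *: h) (fun y => M y v) ('d (fun y => M y v) (x + t *: h)).
  exact: differentiableP (Md _ _ xv).
have cd := @is_diff_comp _ _ _ _ _ _ _ _ t gd Mdi.
have -> : (fun s : R => M (x + s *: h) v) = (fun y => M y v) \o (cst x + *:%R^~ h : R -> Y).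
  by apply: funext => s.
have dd : differentiable ((fun y => M y v) \o (cst x + *:%R^~ h : R -> Y)) t by [].
apply: is_derive_eq; first exact/derivableP/diff_derivable.
rewrite deriveE // diff_val /=.
by congr ('d _ _ _); rewrite /= add0r scale1r.
Qed.


Lemma M_lip u x v : `|M u v - M x v| <= Lam * `|u - x|.
Proof.
have [[t [t01 vt]]|nseg] := pselect (exists t : R, 0 <= t <= 1 /\ v = x + t *: (u - x)).
  have hu : M u v <= Lam * `|u - x|.
    have /andP[_ h1] := Mb u v; apply: le_trans h1 _.
    rewrite ler_pM2l // vt opprD addrA -[u - x - _]/(u - x - t *: (u - x)).
    rewrite -{1}[u - x]scale1r -scalerBl normrZ.
    case/andP: t01 => t0 t1.
    rewrite ger0_norm ?subr_ge0 //; rewrite ler_piMl //; lra.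
  have hx : M x v <= Lam * `|u - x|.
    have /andP[_ h1] := Mb x v; apply: le_trans h1 _.
    rewrite ler_pM2l // vt opprD addrA subrr add0r normrN normrZ.
    case/andP: t01 => t0 t1.
    by rewrite ger0_norm // ler_piMl.
  have := M0 u v; have := M0 x v.
  rewrite ler_norml; move: hu hx; lra.
have nv : forall t, 0 <= t <= 1 -> x + t *: (u - x) != v.
  by move=> t t01; apply/eqP => e; apply: nseg; exists t.
have cont : {within `[0, 1], continuous (fun s : R => M (x + s *: (u - x)) v)}.
  apply: derivable_within_continuous => t t01.
  have t01' : 0 <= t <= 1 by move: t01; rewrite in_itv.
  by case: (@phi_diff x v (u - x) t (nv t t01')).
have pd : forall t : R, t \in `]0, 1[ -> is_derive t 1 (fun s : R => M (x + s *: (u - x)) v)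
   ('d (fun y => M y v) (x + t *: (u - x)) (u - x)).
  move=> t t01; apply: phi_diff; apply: nv.
  by move: t01; rewrite in_itv /= => /andP[/ltW -> /ltW ->].
have [c c01 E] := MVT (@ltr01 R) pd cont.
have ux : x + (u - x) = u by rewrite addrC subrK.
move: E; rewrite scale1r scale0r addr0 subr0 mulr1 ux => ->.
apply: dM_le; apply: nv.
by move: c01; rewrite in_itv /= => /andP[/ltW -> /ltW ->].
Qed.


Lemma Mcont v : continuous (fun x => M x v).
Proof.
move=> x; apply/cvgrPdist_le => e e0.
have := (@cvg_id _ (nbhs x)); move/cvgrPdist_le => /(_ (e / Lam)).
rewrite divr_gt0 // => /(_ isT); apply: filterS => z hz.
apply: le_trans (M_lip _ _ _) _.
by rewrite -ler_pdivlMl // mulrC.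
Qed.

Lemma Mle x v : M x v <= Lam * `|x - v|.
Proof. by case/andP: (Mb x v). Qed.
Lemma Mge x v : lam * `|x - v| <= M x v.
Proof. by case/andP: (Mb x v). Qed.

Section BP.
Context (w : Y -> R) (hw : continuous w) (B : R) (hwb : forall u, `|w u| <= B)
  (C0 : R) (C0pos : 0 < C0)
  (Hsj : forall y eta, superjet w y eta -> forall d, `|d| = 1 -> - C0 < eta d)
  (a b : Y).

Definition K := 4 * C0 / lam.
Hypothesis gap : K * Lam * `|b - a| < w b - w a.

Lemma K0 : 0 < K.
Proof. by rewrite /K divr_gt0 // mulr_gt0. Qed.

Definition F x := w x - K * M x a.

Lemma FB x : F x <= B.
Proof.
rewrite /F; have := ler_norm (w x); have := hwb x; have := mulr_ge0 (ltW K0) (M0 x a).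
lra.
Qed.

Definition G' := B - F b + 1.
Lemma G'0 : 0 < G'. Proof. rewrite /G'; have := FB b; lra. Qed.
Definition gam := C0 / (16 * Lam ^+ 2).
Lemma gam0 : 0 < gam.
Proof. by rewrite /gam divr_gt0 // mulr_gt0 // exprn_gt0. Qed.
Definition c := Num.min (lam * gam) (lam ^+ 2 * gam ^+ 2 / G').
Lemma c0 : 0 < c.
Proof.
rewrite /c lt_min mulr_gt0 ?gam0 //= divr_gt0 ?G'0 //.
by rewrite mulr_gt0 // exprn_gt0 // gam0.
Qed.
Definition cw i := c * (2^-1) ^+ i.
Lemma cw0 i : 0 < cw i.
Proof. by rewrite /cw mulr_gt0 ?c0 // exprn_gt0 //; lra. Qed.
Definition tau n : R := (n.+1%:R)^-1.
Lemma tau0 n : 0 < tau n.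
Proof. by rewrite /tau invr_gt0 ltr0n. Qed.
Lemma tau_le1 n : tau n <= 1.
Proof. by rewrite /tau invf_le1 ?ler1n // ltr0n. Qed.
Definition e n := cw n.+1 * tau n ^+ 2.
Lemma e0 n : 0 < e n.
Proof. by rewrite /e mulr_gt0 ?cw0 // exprn_gt0 // tau0. Qed.

Definition Hs (s : nat -> Y) n x := F x - \sum_(i < n.+1) cw i * M x (s i) ^+ 2.

Lemma Hs_bnd s n x : Hs s n x <= B.
Proof.
rewrite /Hs; have := FB x.
have : 0 <= \sum_(i < n.+1) cw i * M x (s i) ^+ 2.
  by apply: sumr_ge0 => i _; rewrite mulr_ge0 ?sqr_ge0 // ltW // cw0.
lra.
Qed.

Definition next (s : nat -> Y) n : Y :=
  proj1_sig (cid (exist_near_sup (@Hs_bnd s n) (s n) (e n) (e0 n))).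

Lemma nextP s n : Hs s n (s n) <= Hs s n (next s n) /\
  forall u, Hs s n u <= Hs s n (next s n) + e n.
Proof. exact: (proj2_sig (cid (exist_near_sup (@Hs_bnd s n) (s n) (e n) (e0 n)))). Qed.

Fixpoint build n : nat -> Y :=
  if n is m.+1 then (fun i => if (i <= m)%N then build m i else next (build m) m)
  else (fun _ => b).

Definition v n := build n n.

Lemma buildE n i : (i <= n)%N -> build n i = v i.
Proof.
elim: n i => [|n IH] i.
  by rewrite leqn0 => /eqP ->.
rewrite leq_eqVlt => /orP[/eqP ->|]; first by [].
rewrite ltnS => lin /=; rewrite lin; exact: IH.
Qed.

Lemma HbE n : Hs (build n) n = Hs v n.
Proof.
apply: funext => x; rewrite /Hs; congr (_ - _); apply: eq_bigr => i _.
by rewrite buildE // -ltnS.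
Qed.

Lemma vS n : v n.+1 = next (build n) n.
Proof. by rewrite /v /= ltnn. Qed.

Definition Hn n := Hs v n.

Lemma P3 n : Hn n (v n) <= Hn n (v n.+1) /\ forall u, Hn n u <= Hn n (v n.+1) + e n.
Proof.
have := nextP (build n) n; rewrite HbE -vS.
by rewrite -/(v n).
Qed.

Lemma HnS n x : Hn n.+1 x = Hn n x - cw n.+1 * M x (v n.+1) ^+ 2.
Proof. by rewrite /Hn /Hs big_ord_recr /=; ring. Qed.

Lemma HnS_le n x : Hn n.+1 x <= Hn n x.
Proof. rewrite HnS; have := mulr_ge0 (ltW (cw0 n.+1)) (sqr_ge0 (M x (v n.+1))); lra. Qed.

Lemma Hn_mono n k x : Hn (n + k) x <= Hn n x.
Proof.
elim: k => [|k IH]; first by rewrite addn0.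
by rewrite addnS; apply: le_trans (HnS_le _ _) IH.
Qed.

Lemma P2 n : Hn n.+1 (v n.+1) = Hn n (v n.+1).
Proof. by rewrite HnS Mxx expr0n /= mulr0 subr0. Qed.

Lemma Qv n k : Hn n (v n) <= Hn (n + k) (v (n + k)).
Proof.
elim: k => [|k IH]; first by rewrite addn0.
apply: le_trans IH _; rewrite addnS P2; exact: (P3 _).1.
Qed.

Lemma Nest n k : Hn n (v n) <= Hn n (v (n + k)).
Proof. exact: le_trans (Qv n k) (Hn_mono _ _ _). Qed.


Lemma Dist n k : `|v (n.+1 + k) - v n.+1| <= tau n / lam.
Proof.
set m := (n.+1 + k)%N.
have h1 : Hn n (v m) <= Hn n (v n.+1) + e n by exact: (P3 n).2.
have h2 : Hn n.+1 (v n.+1) <= Hn n.+1 (v m) by exact: Nest.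
have h3 := HnS n (v m); rewrite P2 in h2.
have : cw n.+1 * M (v m) (v n.+1) ^+ 2 <= cw n.+1 * tau n ^+ 2.
  rewrite -/(e n); lra.
rewrite ler_pM2l ?cw0 // => hsq.
have hM : M (v m) (v n.+1) <= tau n.
  rewrite -(ler_pXn2r (_ : 0 < 2)%N) ?nnegrE ?M0 //; exact: ltW (tau0 n).
rewrite ler_pdivlMr // mulrC; apply: le_trans hM; exact: Mge.
Qed.

Lemma tau_mono n m : (n <= m)%N -> tau m <= tau n.
Proof.
by move=> nm; rewrite /tau lef_pV2 ?posrE ?ltr0n // ler_nat.
Qed.

Lemma v_cvg : cvgn v.
Proof.
apply: cauchy_cvg; apply: cauchy_exP => eps eps0.
have [N hN] : exists N : nat, tau N / lam < eps.
  exists (Num.Def.archi_bound ((lam * eps)^-1)).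
  set N := Num.Def.archi_bound _.
  have hb := @archi_boundP _ ((lam * eps)^-1) (ltW _).
  rewrite invr_gt0 mulr_gt0 // in hb; have {}hb := hb isT.
  rewrite /tau ltr_pdivrMr // -ltf_pV2 ?posrE ?mulr_gt0 ?invr_gt0 ?ltr0n //.
  rewrite invrK mulrC; apply: lt_le_trans hb _; rewrite ler_nat //.
exists (v N.+1); exists N.+1 => // m /= Nm.
rewrite -ball_normE /ball_ /=.
have -> : m = (N.+1 + (m - N.+1))%N by rewrite subnKC.
by rewrite -normrN opprB; apply: le_lt_trans (Dist _ _) hN.
Qed.

Definition y := limn v.

Lemma vy_cvg : v @ \oo --> y.
Proof. by apply: v_cvg. Qed.

Lemma y_approx d : 0 < d -> \forall m \near \oo, `|y - v m| < d.
Proof.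
move=> d0; have hv : v @ \oo --> y by apply: v_cvg.
by move/cvgrPdist_lt : hv; apply.
Qed.

Lemma vy n : `|y - v n.+1| <= tau n / lam.
Proof.
apply: le_approx => d d0.
have [N _ hN] := @y_approx d d0.
pose m := (n.+1 + N)%N.
have hm := hN m (leq_addl _ _).
have E : y - v n.+1 = (y - v m) + (v m - v n.+1) by rewrite addrA subrK.
rewrite E; apply: le_trans (ler_normD _ _) _.
have := Dist n N; rewrite -/m => h; simpl in hm; lra.
Qed.

Lemma sq_cont (f : Y -> R) : continuous f -> continuous (fun x => f x ^+ 2).
Proof.
move=> fc x.
have -> : (fun x => f x ^+ 2) = f \* f by apply: funext => z; rewrite expr2.
by apply: continuousM; apply: fc.
Qed.

Lemma F_cont : continuous F.
Proof.
move=> x.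
have -> : F = w - (cst K \* (fun x => M x a)) by apply: funext.
apply: continuousB; first exact: hw.
apply: continuousM; [exact: cvg_cst | exact: Mcont].
Qed.

Lemma Hn_cont n : continuous (Hn n).
Proof.
move=> x.
have -> : Hn n = F - (fun x => \sum_(i < n.+1) cw i * M x (v i) ^+ 2) by apply: funext.
apply: continuousB; first exact: F_cont.
have gc : forall i, continuous (fun x => cw i * M x (v i) ^+ 2).
  move=> i z.
  have -> : (fun x => cw i * M x (v i) ^+ 2) = cst (cw i) \* (fun x => M x (v i) ^+ 2) by apply: funext.
  apply: continuousM; [exact: cvg_cst | apply: sq_cont; exact: Mcont].
exact: (@cont_sum R Y _ n.+1 gc x).
Qed.

Lemma YH n : Hn n (v n) <= Hn n y.
Proof.
apply: le_approx => d d0.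
have hc := Hn_cont n y.
have : (Hn n \o v) @ \oo --> Hn n y.
  exact: (cvg_comp v (Hn n) vy_cvg hc).
move/cvgrPdist_lt => /(_ d d0) [N _ hN].
have := hN (n + N)%N (leq_addl _ _) => /= h.
have := Nest n N; rewrite ltr_distlC in h; lra.
Qed.

Lemma MainIneq n u : Hn n.+1 u <= Hn n.+1 y + e n.
Proof.
apply: le_trans (HnS_le _ _) _.
apply: le_trans ((P3 n).2 u) _.
rewrite -P2 lerD2r; exact: YH.
Qed.

Lemma H0E x : Hn 0 x = F x - cw 0 * M x b ^+ 2.
Proof. by rewrite /Hn /Hs big_ord1. Qed.

Lemma Fy : F b <= Hn 0 y.
Proof.
have := YH 0; rewrite H0E.
have -> : v 0 = b by [].
by rewrite Mxx expr0n /= mulr0 subr0.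
Qed.

Lemma Fab : F a < F b.
Proof.
rewrite /F Mxx mulr0 subr0.
have := Mle b a; have := K0; move: gap => g.
have := mulr_ge0 (ltW K0) (M0 b a); nra.
Qed.

Lemma ya : y != a.
Proof.
apply/eqP => ya; have := Fy; rewrite H0E ya.
have := Fab; have := mulr_ge0 (ltW (cw0 0)) (sqr_ge0 (M a b)); lra.
Qed.

Lemma cyb : c * `|y - b| <= gam.
Proof.
have h1 : cw 0 * M y b ^+ 2 <= F y - F b by have := Fy; rewrite H0E; lra.
have h2 : c * (lam * `|y - b|) ^+ 2 <= G'.
  have : (lam * `|y - b|) ^+ 2 <= M y b ^+ 2.
    by rewrite ler_sqr ?nnegrE ?M0 ?mulr_ge0 //; [apply: Mge | apply: ltW].
  move: h1; rewrite /cw expr0 mulr1 /G'; have := FB y; have := c0.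
  move=> hc hy h1 hm; have := ler_wpM2l (ltW hc) hm; lra.
have hcl : c <= lam ^+ 2 * gam ^+ 2 / G' by rewrite /c ge_min lexx orbT.
have h3 : (c * `|y - b|) ^+ 2 <= gam ^+ 2.
  have : c * (c * (lam * `|y - b|) ^+ 2) <= c * G' by rewrite ler_pM2l // c0.
  rewrite ler_pdivlMr ?G'0 // in hcl.
  have := c0; have := G'0; have := lam0.
  move=> l0 g0 cc0 h.
  have e1 : (c * `|y - b|) ^+ 2 * lam ^+ 2 = c * (c * (lam * `|y - b|) ^+ 2).
    by ring.
  have : (c * `|y - b|) ^+ 2 * lam ^+ 2 <= gam ^+ 2 * lam ^+ 2.
    rewrite e1; apply: le_trans h _; lra.
  by rewrite ler_pM2r // exprn_gt0.
move: h3; rewrite ler_sqr // nnegrE; [apply: mulr_ge0 =>//; exact: ltW c0 | exact: ltW gam0].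
Qed.

Definition D i h := 'd (fun x => M x (v i)) y h.
Definition rp i h := 2 * M y (v i) * D i h.
Definition P n h := \sum_(i < n) cw i * rp i h.
Definition beta := c * `|y - b| + c / lam.

Lemma rp_bnd i h : `|rp i h| <= 2 * Lam * M y (v i) * `|h|.
Proof.
have [yv|yv] := eqVneq y (v i).
  by rewrite /rp yv Mxx mulr0 mul0r normr0 mulr0 mul0r.
rewrite /rp normrM ger0_norm ?mulr_ge0 ?M0 //.
have := @dM_le y (v i) yv h; rewrite -/(D i h) => hd.
have hm : 0 <= 2 * M y (v i) by rewrite mulr_ge0 ?M0.
have := ler_wpM2l hm hd; rewrite !mulrA [2 * M y (v i) * Lam]mulrAC.
done.
Qed.

Lemma beta0 : 0 <= beta.
Proof.
have := c0; rewrite /beta => hc.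
apply: addr_ge0; first exact: mulr_ge0 (ltW hc) (normr_ge0 _).
exact: divr_ge0 (ltW hc) (ltW lam0).
Qed.

Lemma cwy i : cw i * `|y - v i| <= (2^-1) ^+ i * beta.
Proof.
have h2 : 0 <= (2^-1 : R) ^+ i by apply: exprn_ge0; lra.
case: i h2 => [|n] h2.
  rewrite /cw /beta !expr0 !mulr1 mul1r.
  have -> : v 0 = b by [].
  have : 0 <= c / lam by exact: divr_ge0 (ltW c0) (ltW lam0).
  lra.
have := vy n; have := tau_le1 n; rewrite /cw /beta => t1 hv.
have hl : tau n / lam <= 1 / lam by rewrite ler_pM2r ?invr_gt0.
have hcy : 0 <= c * `|y - b| by exact: mulr_ge0 (ltW c0) (normr_ge0 _).
have hcl : c * `|y - v n.+1| <= c / lam.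
  rewrite ler_pM2l ?c0 //; apply: le_trans hv _; by rewrite div1r in hl.
have := ler_wpM2l h2 hcl; have := mulr_ge0 h2 hcy; nra.
Qed.

Lemma term_bnd h i : `|cw i * rp i h| <= (2^-1) ^+ i * (2 * Lam ^+ 2 * beta * `|h|).
Proof.
rewrite normrM (ger0_norm (ltW (cw0 i))).
apply: le_trans (ler_wpM2l (ltW (cw0 i)) (rp_bnd i h)) _.
have hM := Mle y (v i).
have hc := cwy i.
have hcw := cw0 i.
have hn := normr_ge0 h.
have hl := Lam0.
have h2 : 0 <= (2^-1 : R) ^+ i by apply: exprn_ge0; lra.
have e1 : cw i * (2 * Lam * M y (v i) * `|h|) <= cw i * (2 * Lam * (Lam * `|y - v i|) * `|h|).
  apply: ler_wpM2l; first exact: ltW.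
  apply: ler_wpM2r => //; apply: ler_wpM2l => //; rewrite mulr_ge0 // ltW //.
apply: le_trans e1 _.
have -> : cw i * (2 * Lam * (Lam * `|y - v i|) * `|h|) = (cw i * `|y - v i|) * (2 * Lam ^+ 2 * `|h|) by ring.
have -> : (2^-1) ^+ i * (2 * Lam ^+ 2 * beta * `|h|) = ((2^-1) ^+ i * beta) * (2 * Lam ^+ 2 * `|h|) by ring.
apply: ler_wpM2r => //; rewrite mulr_ge0 // mulr_ge0 // exprn_ge0 // ltW //.
Qed.

Lemma P_cvg h : cvgn (fun n => P n h).
Proof. exact: (series_cvg (term_bnd h)). Qed.

Definition S h := limn (fun n => P n h).

Lemma P_S h : (fun n => P n h) @ \oo --> S h.
Proof. exact: (P_cvg h). Qed.

Lemma P_approx h d : 0 < d -> \forall n \near \oo, `|S h - P n h| < d.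
Proof. by move=> d0; move/cvgrPdist_lt : (P_S h); apply. Qed.

Lemma P_bnd h n : `|P n h| <= 4 * Lam ^+ 2 * beta * `|h|.
Proof.
have := series_bnd (term_bnd h) n; rewrite -/(P n h).
have -> : 2 * (2 * Lam ^+ 2 * beta * `|h|) = 4 * Lam ^+ 2 * beta * `|h| by ring.
done.
Qed.

Lemma S_bnd h : `|S h| <= 4 * Lam ^+ 2 * beta * `|h|.
Proof.
apply: le_approx => d d0.
have [N _ hN] := @P_approx h d d0.
have := hN N (leqnn N); have := P_bnd h N.
have := ler_normD (S h - P N h) (P N h); rewrite subrK.
lra.
Qed.

Lemma D_lin i k h1 h2 : D i (k *: h1 + h2) = k * D i h1 + D i h2.
Proof. by rewrite /D linearP. Qed.

Lemma P_lin n k h1 h2 : P n (k *: h1 + h2) = k * P n h1 + P n h2.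
Proof.
rewrite /P mulr_sumr -big_split /=; apply: eq_bigr => i _.
rewrite /rp D_lin; ring.
Qed.

Lemma S_lin k h1 h2 : S (k *: h1 + h2) = k * S h1 + S h2.
Proof.
apply/eqP; rewrite -subr_eq0 -normr_le0; apply: le_approx => d d0.
rewrite add0r.
have dd : 0 < d / (3 + `|k|) by rewrite divr_gt0 // ltr_pwDl.
have [N1 _ h1'] := @P_approx (k *: h1 + h2) _ dd.
have [N2 _ h2'] := @P_approx h1 _ dd.
have [N3 _ h3'] := @P_approx h2 _ dd.
set N := maxn N1 (maxn N2 N3).
have := h1' N (leq_maxl _ _); have := h2' N (leq_trans (leq_maxl _ _) (leq_maxr _ _)).
have := h3' N (leq_trans (leq_maxr _ _) (leq_maxr _ _)).
rewrite P_lin => a3 a2 a1.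
have E : S (k *: h1 + h2) - (k * S h1 + S h2) =
  (S (k *: h1 + h2) - (k * P N h1 + P N h2)) - k * (S h1 - P N h1) - (S h2 - P N h2) by ring.
rewrite E; apply: le_trans (ler_normB _ _) _.
apply: le_trans (lerD (ler_normB _ _) (lexx _)) _.
rewrite normrM.
have hk := normr_ge0 k.
have e2 : `|k| * `|S h1 - P N h1| <= `|k| * (d / (3 + `|k|)) by rewrite ler_wpM2l // ltW.
have e3 : d / (3 + `|k|) * (3 + `|k|) = d by rewrite divfK // gt_eqF // ltr_pwDl.
nra.
Qed.

Lemma S_sub h1 h2 : S (h1 - h2) = S h1 - S h2.
Proof.
have -> : h1 - h2 = (-1) *: h2 + h1 by rewrite scaleN1r addrC.
by rewrite S_lin mulN1r addrC.
Qed.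

Lemma S_cont : continuous S.
Proof.
move=> x; apply/cvgrPdist_le => eps eps0.
set s := 4 * Lam ^+ 2 * beta + 1.
have s0 : 0 < s by rewrite /s ltr_pwDr // mulr_ge0 ?beta0 // mulr_ge0 // exprn_ge0 // ltW.
have := (@cvg_id _ (nbhs x)); move/cvgrPdist_le => /(_ (eps / s)).
rewrite divr_gt0 // => /(_ isT); apply: filterS => z hz.
rewrite -S_sub; apply: le_trans (S_bnd _) _.
have : 4 * Lam ^+ 2 * beta * `|x - z| <= s * `|x - z| by rewrite ler_wpM2r // /s lerDl.
move=> h; apply: le_trans h _; by rewrite -ler_pdivlMl // mulrC.
Qed.

Definition dMa := 'd (fun x => M x a) y.
Definition eta h := K * dMa h + S h.

Lemma eta_dual : in_dual eta.
Proof.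
split.
  move=> k h1 h2; rewrite /eta S_lin /dMa linearP /=.
  have E : forall d1 d2 : R, K * (k * d1 + d2) + (k * S h1 + S h2) = k * (K * d1 + S h1) + (K * d2 + S h2) by move=> *; ring.
  exact: E.
have -> : eta = (cst K \* dMa) + S by apply: funext.
move=> x; apply: continuousD; last exact: S_cont.
apply: continuousM; first exact: cvg_cst.
exact: (diff_continuous (Md _ _ ya)).
Qed.

Definition Rm i u := M u (v i) ^+ 2 - M y (v i) ^+ 2 - rp i (u - y).

Lemma Rm_tail i u xi : `|u - y| <= xi -> `|y - v i| <= xi ->
  Rm i u <= 5 * Lam ^+ 2 * xi * `|u - y|.
Proof.
set h := `|u - y|; set d := `|y - v i|.
move=> hu hv.
set mu := M u (v i); set my := M y (v i).
have hl : `|mu - my| <= Lam * h by apply: M_lip.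
have hmu : mu <= Lam * (h + d).
  apply: le_trans (Mle _ _) _; rewrite ler_pM2l //.
  have -> : u - v i = (u - y) + (y - v i) by rewrite addrA subrK.
  exact: ler_normD.
have hmy : my <= Lam * d by apply: Mle.
have hr : `|rp i (u - y)| <= 2 * Lam * my * h by apply: rp_bnd.
have mu0 : 0 <= mu by apply: M0.
have my0 : 0 <= my by apply: M0.
have h0 : 0 <= h by apply: normr_ge0.
have d0 : 0 <= d by apply: normr_ge0.
have L0 := Lam0.
rewrite /Rm -/mu -/my.
have e1 : mu ^+ 2 - my ^+ 2 <= Lam * h * (mu + my).
  have -> : mu ^+ 2 - my ^+ 2 = (mu - my) * (mu + my) by ring.
  apply: le_trans (ler_norm _) _; rewrite normrM (ger0_norm (addr_ge0 mu0 my0)).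
  by apply: ler_wpM2r => //; apply: addr_ge0.
have e2 : Lam * h * (mu + my) <= Lam * h * (Lam * (h + d) + Lam * d).
  by apply: ler_wpM2l; [apply: mulr_ge0; [apply: ltW|] | apply: lerD].
have e3 : - rp i (u - y) <= 2 * Lam * (Lam * d) * h.
  apply: le_trans (_ : `|rp i (u - y)| <= _).
    by rewrite -normrN; apply: ler_norm.
  apply: le_trans hr _; apply: ler_wpM2r => //; apply: ler_wpM2l => //.
  by rewrite mulr_ge0 // ltW.
have e4 : Lam * h * (Lam * (h + d) + Lam * d) + 2 * Lam * (Lam * d) * h
   = Lam ^+ 2 * h * (h + 4 * d) by ring.
have e5 : Lam ^+ 2 * h * (h + 4 * d) <= Lam ^+ 2 * h * (5 * xi).
  apply: ler_wpM2l; first by apply: mulr_ge0 => //; apply: exprn_ge0; apply: ltW.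
  lra.
have e6 : Lam ^+ 2 * h * (5 * xi) = 5 * Lam ^+ 2 * xi * h by ring.
lra.
Qed.

Lemma near_norm (r : R) : 0 < r -> \forall u \near y, `|u - y| <= r.
Proof.
move=> r0; have := (@cvg_id _ (nbhs y)); move/cvgrPdist_le => /(_ r r0).
by apply: filterS => u; rewrite distrC.
Qed.

Lemma Rm_near i th : 0 < th -> \forall u \near y, Rm i u <= th * `|u - y|.
Proof.
move=> th0.
have L2 : 0 < Lam ^+ 2 by apply: exprn_gt0.
have r0 : 0 < th / (2 * Lam ^+ 2) by rewrite divr_gt0 // mulr_gt0.
have [yv|yv] := eqVneq y (v i).
  apply: filterS (@near_norm _ r0) => u hu.
  rewrite /Rm /rp -yv Mxx expr0n /= mulr0 mul0r subr0 subr0.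
  have hm := Mle u y; have m0 := M0 u y; have n0 := normr_ge0 (u - y).
  have e1 : M u y ^+ 2 <= (Lam * `|u - y|) ^+ 2 by rewrite ler_sqr // nnegrE mulr_ge0 // ltW.
  have e2 : (Lam * `|u - y|) ^+ 2 = Lam ^+ 2 * `|u - y| * `|u - y| by ring.
  have e3 : Lam ^+ 2 * `|u - y| * `|u - y| <= Lam ^+ 2 * `|u - y| * (th / (2 * Lam ^+ 2)).
    by apply: ler_wpM2l => //; apply: mulr_ge0 => //; apply: ltW.
  have e4 : Lam ^+ 2 * `|u - y| * (th / (2 * Lam ^+ 2)) = th / 2 * `|u - y|.
    by field; rewrite gt_eqF.
  have := mulr_ge0 (ltW th0) n0; lra.
set my := M y (v i).
have my0 : 0 <= my by apply: M0.
have ep0 : 0 < th / (4 * (my + 1)) by rewrite divr_gt0 // mulr_gt0 // ltr_pwDr.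
have hd := @diff_o (fun x => M x (v i)) y (Md _ _ yv) _ ep0.
apply: filterS2 (@near_norm _ r0) hd => u hu hdu.
rewrite /Rm /rp -/my.
set mu := M u (v i).
have hl : `|mu - my| <= Lam * `|u - y| by apply: M_lip.
set h := `|u - y|; set dd := D i (u - y).
have hdu' : `|mu - my - dd| <= th / (4 * (my + 1)) * h by exact: hdu.
have h0 : 0 <= h by apply: normr_ge0.
have E : mu ^+ 2 - my ^+ 2 - 2 * my * dd = (mu - my) ^+ 2 + 2 * my * (mu - my - dd) by ring.
rewrite E.
have e1 : (mu - my) ^+ 2 <= (Lam * h) ^+ 2.
  have -> : (mu - my) ^+ 2 = `|mu - my| ^+ 2.
    by rewrite -normrX ger0_norm // sqr_ge0.
  by rewrite ler_sqr // nnegrE mulr_ge0 // ltW.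
have e2 : (Lam * h) ^+ 2 <= th / 2 * h.
  have -> : (Lam * h) ^+ 2 = Lam ^+ 2 * h * h by ring.
  have e3 : Lam ^+ 2 * h * h <= Lam ^+ 2 * h * (th / (2 * Lam ^+ 2)).
    by apply: ler_wpM2l => //; apply: mulr_ge0 => //; apply: ltW.
  have e4 : Lam ^+ 2 * h * (th / (2 * Lam ^+ 2)) = th / 2 * h.
    by field; rewrite gt_eqF.
  lra.
set q := th / (4 * (my + 1)).
have hq : q * (4 * (my + 1)) = th by rewrite /q divfK // gt_eqF // mulr_gt0 // ltr_pwDr.
have q0 : 0 < q by [].
have e5 : 2 * my * (mu - my - dd) <= 2 * my * (q * h).
  apply: ler_wpM2l; first by rewrite mulr_ge0.
  by apply: le_trans (ler_norm _) hdu'.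
have e6 : 2 * my * (q * h) <= th / 2 * h.
  have -> : 2 * my * (q * h) = (2 * my * q) * h by ring.
  apply: ler_wpM2r => //; nra.
lra.
Qed.


Lemma tau_lt r : 0 < r -> exists N, tau N < r.
Proof.
move=> r0; exists (Num.Def.archi_bound (r^-1)).
have hb := @archi_boundP _ (r^-1) (ltW _); rewrite invr_gt0 r0 in hb.
have {}hb := hb isT.
set N := Num.Def.archi_bound _ in hb *.
rewrite /tau -[X in _ < X]invrK ltf_pV2 ?posrE ?ltr0n ?invr_gt0 //.
by apply: lt_le_trans hb _; rewrite ler_nat.
Qed.

Lemma Rm_all th : 0 < th -> \forall u \near y, forall i, Rm i u <= th * `|u - y|.
Proof.
move=> th0.
set xi := th / (5 * Lam ^+ 2).
have xi0 : 0 < xi by rewrite divr_gt0 // mulr_gt0 // exprn_gt0.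
have [N hN] := @tau_lt (xi * lam) (mulr_gt0 xi0 lam0).
have hfin := @near_all_le _ (nbhs y) (nbhs_filter y) (fun i u => Rm i u <= th * `|u - y|) N (fun i _ => @Rm_near i th th0).
apply: filterS2 hfin (@near_norm xi xi0) => u hu hux i.
have [iN|Ni] := leqP i N; first exact: hu.
have e1 : Rm i u <= 5 * Lam ^+ 2 * xi * `|u - y|.
  apply: Rm_tail => //.
  case: i Ni => // j Nj.
  apply: le_trans (vy j) _.
  rewrite ler_pdivrMr //; apply: le_trans (@tau_mono N j _) (ltW hN).
  by rewrite -ltnS.
have -> : th = 5 * Lam ^+ 2 * xi.
  by rewrite /xi; field; rewrite gt_eqF.
done.
Qed.

Lemma T1 eps : 0 < eps ->
  \forall u \near y, K * (M u a - M y a - dMa (u - y)) <= eps / 2 * `|u - y|.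
Proof.
move=> eps0.
have ep0 : 0 < eps / (2 * K) by rewrite divr_gt0 // mulr_gt0 // K0.
apply: filterS (@diff_o (fun x => M x a) y (Md _ _ ya) _ ep0) => u hu.
have := ler_wpM2l (ltW K0) (le_trans (ler_norm _) hu).
have -> : K * (eps / (2 * K) * `|u - y|) = eps / 2 * `|u - y|.
  by field; rewrite gt_eqF // K0.
done.
Qed.

Lemma sum_cw m : \sum_(i < m) cw i <= 2 * c.
Proof.
rewrite /cw -mulr_sumr mulrC; apply: ler_wpM2r; first exact: ltW c0.
exact: geo_le.
Qed.

Lemma T3 n u : w u - w y - eta (u - y) <=
  K * (M u a - M y a - dMa (u - y)) + \sum_(i < n.+2) cw i * Rm i u
  + (P n.+2 (u - y) - S (u - y)) + e n.
Proof.
have h := MainIneq n u; move: h; rewrite /Hn /Hs /F /eta.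
have E : \sum_(i < n.+2) cw i * Rm i u + P n.+2 (u - y) =
  \sum_(i < n.+2) cw i * M u (v i) ^+ 2 - \sum_(i < n.+2) cw i * M y (v i) ^+ 2.
  rewrite /P -big_split -sumrB /=; apply: eq_bigr => i _; rewrite /Rm; ring.
move: E.
set A := \sum_(i < n.+2) cw i * Rm i u.
set A2 := \sum_(i < n.+2) cw i * M u (v i) ^+ 2.
set A3 := \sum_(i < n.+2) cw i * M y (v i) ^+ 2.
move=> E h.
have E2 : forall d : R, K * (M u a - M y a - d) = K * M u a - K * M y a - K * d by move=> d; ring.
rewrite E2.
lra.
Qed.

Lemma cw_le i : cw i <= c.
Proof.
rewrite /cw -[leRHS]mulr1; apply: ler_wpM2l; first exact: ltW c0.
by apply: exprn_ile1; lra.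
Qed.

Lemma e_le n : e n <= c * tau n.
Proof.
rewrite /e expr2 mulrA; apply: ler_pM; last exact: lexx.
- by apply: mulr_ge0; apply: ltW; [apply: cw0 | apply: tau0].
- exact: ltW (tau0 n).
rewrite -[leRHS]mulr1; apply: ler_pM; [exact: ltW (cw0 _) | exact: ltW (tau0 n) | exact: cw_le | exact: tau_le1].
Qed.

Lemma T4 eps : 0 < eps ->
  \forall u \near y, w u - w y - eta (u - y) <= eps * `|u - y|.
Proof.
move=> eps0.
have th0 : 0 < eps / (4 * c) by rewrite divr_gt0 // mulr_gt0 // c0.
apply: filterS2 (@Rm_all _ th0) (@T1 eps eps0) => u hR hT.
apply: le_approx => d d0.
have d20 : 0 < d / 2 by rewrite divr_gt0.
have [N1 hN1] := @tau_lt (d / 2 / c) (divr_gt0 d20 c0).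
have [N2 _ hN2] := @P_approx (u - y) _ d20.
set n := maxn N1 N2.
have a1 := hN2 n.+2 (leq_trans (leq_maxr N1 N2) (leqW (leqnSn _))).
have a2 : e n < d / 2.
  apply: le_lt_trans (e_le n) _.
  have : tau n <= tau N1 by apply: tau_mono; exact: leq_maxl.
  move=> t1; have := ler_wpM2l (ltW c0) t1.
  move: hN1; rewrite ltr_pdivlMr ?c0 // mulrC => t2 t3.
  by apply: le_lt_trans t3 t2.
have a3 : \sum_(i < n.+2) cw i * Rm i u <= eps / 2 * `|u - y|.
  apply: le_trans (_ : \sum_(i < n.+2) cw i * (eps / (4 * c) * `|u - y|) <= _).
    by apply: ler_sum => i _; apply: ler_wpM2l; [apply: ltW; apply: cw0 | apply: hR].
  rewrite -mulr_suml.
  have hs := sum_cw n.+2.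
  have hp : 0 <= eps / (4 * c) * `|u - y| by apply: mulr_ge0; [apply: ltW | apply: normr_ge0].
  apply: le_trans (ler_wpM2r hp hs) _.
  have -> : 2 * c * (eps / (4 * c) * `|u - y|) = eps / 2 * `|u - y|.
    by field; rewrite gt_eqF // c0.
  done.
have := T3 n u.
have a4 : P n.+2 (u - y) - S (u - y) <= d / 2.
  by apply: le_trans (ltW a1); rewrite -normrN opprB; apply: ler_norm.
have ee : eps / 2 * `|u - y| + eps / 2 * `|u - y| = eps * `|u - y| by field.
lra.
Qed.

Lemma sj : superjet w y eta.
Proof.
split; first exact: eta_dual.
move=> eps eps0.
have H := @T4 eps eps0.
have H2 := nbhs_dnbhs H.
apply: filterS2 H2 (nbhs_dnbhs_neq y) => u hu uy.
have n0 : 0 < `|u - y| by rewrite normr_gt0 subr_eq0.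
by rewrite ler_pdivrMr.
Qed.

Lemma contra : False.
Proof.
have [z [z1 hz]] := @dM_ge y a ya.
rewrite -/dMa in hz.
pose z' := if 0 <= dMa z then z else - z.
have hz' : lam / 2 < dMa z'.
  rewrite /z'; case: ifP => h.
    by rewrite ger0_norm in hz.
  have hn : dMa z < 0 by rewrite ltNge h.
  by rewrite ltr0_norm // in hz; rewrite linearN.
have z'1 : `|z'| <= 1 by rewrite /z'; case: ifP; rewrite ?normrN.
have hbeta : beta <= 2 * gam.
  have := cyb; rewrite /beta.
  have : c / lam <= gam.
    by rewrite ler_pdivrMr // mulrC /c ge_min lexx.
  lra.
have hsig : 4 * Lam ^+ 2 * beta <= C0 / 2.
  have e1 : 4 * Lam ^+ 2 * (2 * gam) = C0 / 2.
    by rewrite /gam; field; rewrite gt_eqF.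
  rewrite -e1; apply: ler_wpM2l => //; apply: mulr_ge0 => //; apply: exprn_ge0; exact: ltW.
have hS : `|S z'| <= C0 / 2.
  apply: le_trans (S_bnd z') _.
  apply: le_trans (_ : 4 * Lam ^+ 2 * beta * 1 <= _); last by rewrite mulr1.
  apply: ler_wpM2l => //; apply: mulr_ge0; first by apply: mulr_ge0 => //; apply: exprn_ge0; exact: ltW.
  exact: beta0.
have hK : K * (lam / 2) = 2 * C0 by rewrite /K; field; rewrite gt_eqF.
have heta : 3 / 2 * C0 <= eta z'.
  rewrite /eta.
  have := ler_wpM2l (ltW K0) (ltW hz').
  have := ler_norm (- S z'); rewrite normrN.
  lra.
have z'0 : z' != 0.
  apply/eqP => z0; move: hz'; rewrite z0 linear0.
  have : 0 < lam / 2 by rewrite divr_gt0.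
  lra.
have nz : 0 < `|z'| by rewrite normr_gt0.
set d := - (`|z'|^-1 *: z').
have d1 : `|d| = 1.
  by rewrite /d normrN normrZ normrV ?unitfE ?gt_eqF // normr_id mulVf // gt_eqF.
have etad : eta d = - (`|z'|^-1 * eta z').
  have [lin _] := eta_dual.
  have h1 := lin (- `|z'|^-1) z' 0.
  rewrite addr0 in h1.
  have h0 : eta 0 = 0.
    have := lin 1 0 0; rewrite scale1r addr0 mul1r.
    move=> h; have : eta 0 + eta 0 = eta 0 + 0 by rewrite -h addr0.
    by move/addrI.
  rewrite h0 addr0 in h1.
  by rewrite /d -scaleNr h1 mulNr.
have hinv : 1 <= `|z'|^-1 by rewrite invf_ge1.
have := @Hsj y eta sj d d1; rewrite etad.

have : eta z' <= `|z'|^-1 * eta z'.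
  rewrite -[leLHS]mul1r; apply: ler_wpM2r => //.
  have : 0 < C0 by []. lra.
move=> h1 h2; have h3 := le_trans heta h1; have h4 := C0pos; lra.
Qed.

End BP.
End Main.
Theorem mainTheorem2 (R : realType)
  (XX Y : completeNormedModType R) (X : set XX) (f : XX -> Y -> R)
  (Phi : Y -> set XX) (w : Y -> R)
  (hX : X !=set0)
  (hf : {within X `*` [set: Y], continuous (fun z : XX * Y => f z.1 z.2)})
  (hPhi : forall u, Phi u `<=` X)
  (hw : continuous w)
  (hwb : exists B : R, forall u, `|w u| <= B)
  (H1 : reflexive_space Y)
  (H2 : exists (M : Y -> Y -> R) (lam Lam : R),
     (forall y1 y2, 0 <= M y1 y2) /\
     (forall y1 y2, y1 != y2 -> differentiable (fun y => M y y2) y1) /\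
     (forall y1 y2, y1 != y2 -> differentiable (fun y => M y1 y) y2) /\
     0 < lam <= 1 /\ 1 <= Lam /\
     (forall y1 y2, lam * `|y1 - y2| <= M y1 y2 <= Lam * `|y1 - y2|) /\
     (forall y1 y2, y1 != y2 ->
        (lam%:E <= dual_norm ('d (fun y => M y y2) y1 : Y -> R))%E /\
        (dual_norm ('d (fun y => M y y2) y1 : Y -> R) <= Lam%:E)%E /\
        (lam%:E <= dual_norm ('d (fun y => M y1 y) y2 : Y -> R))%E /\
        (dual_norm ('d (fun y => M y1 y) y2 : Y -> R) <= Lam%:E)%E))
  (H3 : forall x u d, X x -> `|d| = 1 -> ddiff_exists f x u d)
  (H4 : exists C0 : R, 0 < C0 /\
     forall u d, `|d| = 1 -> ((- C0)%:E < infD f Phi u d)%E)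
  (H5 : forall d : Y, `|d| = 1 -> forall u0 : Y, visc_subsol_at f Phi d w u0) :
  exists L : R, forall y1 y2 : Y, `|w y1 - w y2| <= L * `|y1 - y2|.
Proof.
have [Mf [lam [Lam [M0 [Md [_ [/andP[lam0 _] [Lam1 [Mb Mdn]]]]]]]]] := H2.
have Mdn' : forall y1 y2 : Y, y1 != y2 ->
    (lam%:E <= dual_norm ('d (fun y => Mf y y2) y1 : Y -> R))%E /\
    (dual_norm ('d (fun y => Mf y y2) y1 : Y -> R) <= Lam%:E)%E.
  by move=> y1 y2 hy; have [? [? _]] := Mdn y1 y2 hy.
have [C0 [C0pos HC]] := H4.
have [B hB] := hwb.
have Hsj : forall (y : Y) (eta : Y -> R), superjet w y eta ->
    forall d : Y, `|d| = 1 -> - C0 < eta d.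
  move=> y eta sj d d1.
  have [_ Hv] := H5 d d1 y.
  have h1 := Hv eta sj.
  have h2 := HC y d d1.
  move: h1 h2; case: (infD f Phi y d) => [r| |] //=.
  rewrite lee_fin lte_fin; lra.
exists (K R lam C0 * Lam) => y1 y2.
have key : forall a b : Y, w b - w a <= K R lam C0 * Lam * `|b - a|.
  move=> a b; rewrite leNgt; apply/negP => g.
  exact: (@contra _ _ _ _ _ M0 Md lam0 Lam1 Mb Mdn' _ hw _ hB _ C0pos Hsj _ _ g).
rewrite ler_norml; apply/andP; split.
  by have := key y1 y2; rewrite distrC; lra.
exact: key.
Qed.
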